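(* Let $R$ be a local ring with Jacobson radical $J(R)$, set $\overline{R}=R/J(R)$, and let $C_n$ be a cyclic group of order $n$ (a positive integer). If the characteristic of $\overline{R}$ is not $2$, then the group ring $RC_n$ is 2-good.
   Context: A ring $S$ (associative with identity) is called $n$-good if every element of $S$ is a sum of $n$ units of $S$. A local ring is a ring $R$ in which $R/J(R)$ is a division ring. *)

(* Defs.v *)
From HB Require Import structures.
From mathcomp Require Import all_boot all_order all_algebra.
Set Implicit Arguments. Unset Strict Implicit. Unset Printing Implicit Defensive.
Import Order.TTheory GRing.Theory Num.Theory.
Local Open Scope ring_scope.

Definition jacobson (R : unitRingType) (x : R) : Prop :=
  forall r : R, (1 - r * x) \is a GRing.unit.

(* R is local: R / J(R) is a division ring, i.e. the quotient is nonzero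
   (1 \notin J(R)) and every class x + J(R) with x \notin J(R) has a
   two-sided inverse modulo J(R). *)
Definition local_ring (R : unitRingType) : Prop :=
  ~ jacobson (1 : R) /\
  forall x : R, ~ jacobson x ->
    exists y : R, jacobson (x * y - 1) /\ jacobson (y * x - 1).

(* char (R / J(R)) <> 2  <->  1 + 1 <> 0 in R / J(R)  <->  2 \notin J(R). *)
Definition char_quot_not2 (R : unitRingType) : Prop := ~ jacobson (2%:R : R).

(* The group ring R C_n, with C_n modelled as Z/nZ = 'I_n under addition
   mod n (n > 0); elements are functions 'I_n -> R, addition is pointwise. *)
Definition grring (R : unitRingType) (n : nat) := {ffun 'I_n -> R}.

Definition gr_mul (R : unitRingType) (n : nat) (a b : grring R n) : grring R n :=
  [ffun k : 'I_n => \sum_(i < n) \sum_(j < n)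
                      (if ((i + j) %% n)%N == val k then a i * b j else 0)].

Definition gr_one (R : unitRingType) (n : nat) : grring R n :=
  [ffun k : 'I_n => if val k == 0%N then 1 else 0].

Definition gr_unit (R : unitRingType) (n : nat) (u : grring R n) : Prop :=
  exists v : grring R n, gr_mul u v = gr_one R n /\ gr_mul v u = gr_one R n.

Definition gr_two_good (R : unitRingType) (n : nat) : Prop :=
  forall a : grring R n, exists u v : grring R n,
    gr_unit u /\ gr_unit v /\ a = u + v.

(* Main.v *)
From HB Require Import structures.
Require Import Defs.
From mathcomp Require Import all_boot all_order all_algebra.
From Stdlib Require Import Classical ClassicalEpsilon.
From mathcomp Require Import generic_quotient ring_quotient.
Set Implicit Arguments. Unset Strict Implicit. Unset Printing Implicit Defensive.
Import Order.TTheory GRing.Theory Num.Theory.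
Local Open Scope ring_scope.

Section GR0.
Variables (R : unitRingType) (m : nat).
Local Notation p := m.+1.
Local Notation S := (grring R p).

Lemma gr_mulE (a b : S) k : gr_mul a b k = \sum_(i < p) a i * b (k - i)%R.
Proof.
rewrite /gr_mul ffunE; apply: eq_bigr => i _.
rewrite (eq_bigr (fun j => if j == (k - i)%R then a i * b j else 0)).
  by rewrite -big_mkcond big_pred1_eq.
move=> j _; congr (if _ then _ else _).
have -> : ((i + j) %% p)%N = val (i + j)%R by [].
by rewrite val_eqE [RHS]eq_sym subr_eq addrC eq_sym.
Qed.

Lemma gr_oneE (k : 'I_p) : gr_one R p k = if k == 0%R then 1 else 0.
Proof. by rewrite ffunE. Qed.

Lemma gr_mulA : associative (@gr_mul R p).
Proof.
move=> a b c; apply/ffunP => k; rewrite !gr_mulE.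
under [RHS]eq_bigr do rewrite gr_mulE mulr_suml.
rewrite [RHS]exchange_big /=; apply: eq_bigr => i _.
rewrite gr_mulE mulr_sumr [RHS](reindex_inj (addIr i)) /=.
apply: eq_bigr => t _; rewrite addrK mulrA; congr (_ * _ * c _).
by rewrite opprD addrA addrAC.
Qed.

Lemma gr_mul1l : left_id (gr_one R p) (@gr_mul R p).
Proof.
move=> a; apply/ffunP => k; rewrite gr_mulE (bigD1 0%R) //= gr_oneE eqxx mul1r subr0.
rewrite big1 ?addr0 // => i /negbTE Hi; by rewrite gr_oneE Hi mul0r.
Qed.

Lemma gr_mul1r : right_id (gr_one R p) (@gr_mul R p).
Proof.
move=> a; apply/ffunP => k; rewrite gr_mulE (bigD1 k) //= gr_oneE subrr eqxx mulr1.
rewrite big1 ?addr0 // => i Hi; rewrite gr_oneE subr_eq0 eq_sym (negbTE Hi).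
by rewrite mulr0.
Qed.

Lemma gr_mulDl : left_distributive (@gr_mul R p) +%R.
Proof.
move=> a b c; apply/ffunP => k; rewrite gr_mulE [RHS]ffunE !gr_mulE -big_split /=.
by apply: eq_bigr => i _; rewrite ffunE mulrDl.
Qed.

Lemma gr_mulDr : right_distributive (@gr_mul R p) +%R.
Proof.
move=> a b c; apply/ffunP => k; rewrite gr_mulE [RHS]ffunE !gr_mulE -big_split /=.
by apply: eq_bigr => i _; rewrite ffunE mulrDr.
Qed.

Lemma gr_one_neq0 : gr_one R p != 0.
Proof.
apply/eqP => /ffunP /(_ 0%R); rewrite gr_oneE eqxx ffunE => /eqP.
by rewrite oner_eq0.
Qed.
End GR0.

Definition GR (R : unitRingType) (m : nat) := grring R m.+1.
HB.instance Definition _ R m := GRing.Zmodule.copy (GR R m) {ffun 'I_m.+1 -> R}.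
HB.instance Definition _ R m := GRing.Zmodule_isNzRing.Build (GR R m)
  (@gr_mulA R m) (@gr_mul1l R m) (@gr_mul1r R m) (@gr_mulDl R m) (@gr_mulDr R m)
  (@gr_one_neq0 R m).


Record jideal (T : nzRingType) (P : T -> Prop) := JIdeal {
  jP0 : P 0;
  jPD : forall x y, P x -> P y -> P (x + y);
  jPN : forall x, P x -> P (- x);
  jPMl : forall r x, P x -> P (r * x);
  jPMr : forall x r, P x -> P (x * r);
  jP1u : forall x, P x -> exists w, w * (1 + x) = 1 /\ (1 + x) * w = 1 }.

Lemma jideal_conv (T : nzRingType) (P : T -> Prop) :
  jideal P -> @jideal (T^c) P.
Proof.
case=> H0 HD HN HMl HMr Hu; split => //.
- by move=> r x Hx; apply: HMr.
- by move=> x r Hx; apply: HMl.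
- by move=> x /Hu [w [H1 H2]]; exists w; split.
Qed.

Section Gen.
Variables (T : nzRingType) (P : T -> Prop) (HP : jideal P).

Lemma jPsum (I : finType) (F : I -> T) : (forall i, P (F i)) -> P (\sum_i F i).
Proof.
move=> H; elim/big_ind: _ => //; [exact: jP0 HP | exact: jPD HP].
Qed.

Lemma jPB x y : P x -> P y -> P (x - y).
Proof. by move=> Hx Hy; apply: (jPD HP) => //; apply: (jPN HP). Qed.

Lemma linsys n (A : 'I_n -> 'I_n -> T) (b : 'I_n -> T) :
  (forall i j, P (A i j - (i == j)%:R)) ->
  exists z : 'I_n -> T, forall i, \sum_j A i j * z j = b i.
Proof.
elim: n A b => [|n IH] A b HA.
  by exists (fun _ => 0) => [[]].
have [w [Hw1 Hw2]] : exists w, w * A ord0 ord0 = 1 /\ A ord0 ord0 * w = 1.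
  have := HA ord0 ord0; rewrite eqxx => /(jP1u HP).
  by rewrite addrC subrK.
have HA0 i : P (A (lift ord0 i) ord0).
  by have := HA (lift ord0 i) ord0; rewrite eq_sym (negbTE (neq_lift _ _)) subr0.
pose A' i j := A (lift ord0 i) (lift ord0 j) - A (lift ord0 i) ord0 * (w * A ord0 (lift ord0 j)).
pose b' i := b (lift ord0 i) - A (lift ord0 i) ord0 * (w * b ord0).
have [z' Hz'] : exists z' : 'I_n -> T, forall i, \sum_j A' i j * z' j = b' i.
  apply: IH => i j; rewrite /A' addrAC; apply: jPB; last by apply: (jPMr HP).
  by have := HA (lift ord0 i) (lift ord0 j); rewrite (inj_eq (@lift_inj _ ord0)).
pose s := \sum_j A ord0 (lift ord0 j) * z' j.
pose z0 := w * (b ord0 - s).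
exists (fun j => if unlift ord0 j is Some j' then z' j' else z0) => i.
rewrite big_ord_recl unlift_none.
under eq_bigr do rewrite liftK.
case: (unliftP ord0 i) => [i'|] -> .
  have := Hz' i'; rewrite /b' /A'.
  have E : \sum_j A' i' j * z' j =
      \sum_j A (lift ord0 i') (lift ord0 j) * z' j - A (lift ord0 i') ord0 * (w * s).
    rewrite /s !mulr_sumr -sumrB; apply: eq_bigr => j _; by rewrite mulrBl !mulrA.
  have := Hz' i'; rewrite E /b' => /eqP; rewrite subr_eq => /eqP ->.
  rewrite /z0 !mulrBr.
  set x := A _ _ * (w * b ord0); set y := A _ _ * (w * s).
  by rewrite addrCA !addrA addrNK subrK.
by rewrite /z0 mulrA Hw2 mul1r subrK.
Qed.

Hypothesis HP1 : ~ P 1.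
Hypothesis Hloc : forall x, P x \/ exists w, w * x = 1 /\ x * w = 1.

Lemma depvec n (v : 'I_n.+1 -> 'I_n -> T) :
  exists d : 'I_n.+1 -> T, (exists i, ~ P (d i)) /\ forall k, P (\sum_i v i k * d i).
Proof.
elim: n v => [|n IH] v.
  by exists (fun _ => 1); split; [exists ord0 | case].
have [Hall|Hex] := classic (forall i, P (v i ord0)).
  have [d' [[i0 Hi0] Hd']] := IH (fun i k => v (lift ord0 i) (lift ord0 k)).
  exists (fun i => if unlift ord0 i is Some i' then d' i' else 0); split.
    by exists (lift ord0 i0); rewrite liftK.
  move=> k; case: (unliftP ord0 k) => [k'|] ->.
    rewrite big_ord_recl unlift_none mulr0 add0r.
    by under eq_bigr do rewrite liftK.
  by apply: jPsum => i; apply: (jPMr HP).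
have [j Hj] := not_all_ex_not _ _ Hex.
have [|[w [Hw1 Hw2]]] := Hloc (v j ord0); first by move=> /Hj.
pose v' i k := v (lift j i) (lift ord0 k) - v j (lift ord0 k) * (w * v (lift j i) ord0).
have [d' [[i0 Hi0] Hd']] := IH v'.
pose dj := - \sum_i (w * v (lift j i) ord0) * d' i.
exists (fun i => if unlift j i is Some i' then d' i' else dj); split.
  by exists (lift j i0); rewrite liftK.
have E k : \sum_i v i k * (if unlift j i is Some i' then d' i' else dj) =
    \sum_i (v (lift j i) k - v j k * (w * v (lift j i) ord0)) * d' i.
  rewrite (bigD1_ord j) //= unlift_none.
  under eq_bigr do rewrite liftK.
  rewrite /dj mulrN mulr_sumr -sumrN -big_split /=.
  by apply: eq_bigr => i _; rewrite mulrBl !mulrA addrC.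
move=> k; rewrite E; case: (unliftP ord0 k) => [k'|] ->.
  exact: Hd'.
apply: jPsum => i; rewrite mulrA Hw2 mul1r subrr mul0r; exact: jP0 HP.
Qed.

Lemma depvecL n (v : 'I_n.+1 -> 'I_n -> T) :
  exists d : 'I_n.+1 -> T, (exists i, ~ P (d i)) /\ forall k, P (\sum_i d i * v i k).
Proof.
elim: n v => [|n IH] v.
  by exists (fun _ => 1); split; [exists ord0 | case].
have [Hall|Hex] := classic (forall i, P (v i ord0)).
  have [d' [[i0 Hi0] Hd']] := IH (fun i k => v (lift ord0 i) (lift ord0 k)).
  exists (fun i => if unlift ord0 i is Some i' then d' i' else 0); split.
    by exists (lift ord0 i0); rewrite liftK.
  move=> k; case: (unliftP ord0 k) => [k'|] ->.
    rewrite big_ord_recl unlift_none mul0r add0r.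
    by under eq_bigr do rewrite liftK.
  by apply: jPsum => i; apply: (jPMl HP).
have [j Hj] := not_all_ex_not _ _ Hex.
have [|[w [Hw1 Hw2]]] := Hloc (v j ord0); first by move=> /Hj.
pose v' i k := v (lift j i) (lift ord0 k) - (v (lift j i) ord0 * w) * v j (lift ord0 k).
have [d' [[i0 Hi0] Hd']] := IH v'.
pose dj := - \sum_i d' i * (v (lift j i) ord0 * w).
exists (fun i => if unlift j i is Some i' then d' i' else dj); split.
  by exists (lift j i0); rewrite liftK.
have E k : \sum_i (if unlift j i is Some i' then d' i' else dj) * v i k =
    \sum_i d' i * (v (lift j i) k - (v (lift j i) ord0 * w) * v j k).
  rewrite (bigD1_ord j) //= unlift_none.
  under eq_bigr do rewrite liftK.
  rewrite /dj mulNr mulr_suml -sumrN -big_split /=.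
  by apply: eq_bigr => i _; rewrite mulrBr !mulrA -mulNr addrC.
move=> k; rewrite E; case: (unliftP ord0 k) => [k'|] ->.
  exact: Hd'.
apply: jPsum => i; rewrite -mulrA Hw1 mulr1 subrr mulr0; exact: jP0 HP.
Qed.
End Gen.

Section Abs.
Variable Q : pzRingType.
Variables (a p q b N M h : Q).
Hypotheses (Hqpp : q + p = 1) (Hqp : q * p = 0) (Hpq : p * q = 0) (Hqq : q * q = q) (Hpp : p * p = p)
  (Hab : a * b = p) (Hba : b * a = p) (Hpb : p * b = b) (Hbp : b * p = b)
  (Hqb : q * b = 0) (Hbq : b * q = 0) (Hap : a * p = p * a) (HN : N = a * q)
  (HqN : q * N = N) (HNb : N * b = 0)
  (HM1 : (1 + N) * M = 1) (HM2 : M * (1 + N) = 1) (HMq : M * q = q * M)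
  (HMp : M * p = p * M) (Hc1q : (1 + N) * q = q * (1 + N))
  (Hh1 : h * 2 = 1) (Hh2 : 2 * h = 1) (hC : forall z, h * z = z * h).

Lemma c2 (z : Q) : 2 * z = z * 2.
Proof. by rewrite (commr_nat z 2). Qed.

Lemma abs1 : a = q * (1 + N) + 2 * (a * p) + - (q + a * p).
Proof.
rewrite mulrDr mulr1 HqN mulr_natl mulr2n addrACA (addrC (q + _)) addrK.
by rewrite HN -mulrDr Hqpp mulr1.
Qed.

Lemma abs2 : (q * (1 + N) + 2 * (a * p)) * (q * M + h * b) = 1.
Proof.
rewrite mulrDl (mulrDr (q * (1 + N))) (mulrDr (2 * (a * p))).
have T1 : q * (1 + N) * (q * M) = q.
  by rewrite -mulrA (mulrA (1 + N)) Hc1q -mulrA HM1 mulr1 Hqq.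
have T2 : q * (1 + N) * (h * b) = 0.
  by rewrite mulrA -hC -mulrA -mulrA mulrDl mul1r HNb addr0 Hqb mulr0.
have T3 : 2 * (a * p) * (q * M) = 0.
  by rewrite -!mulrA (mulrA p) Hpq mul0r !mulr0.
have T4 : 2 * (a * p) * (h * b) = p.
  by rewrite mulrA -hC (mulrA h 2) Hh1 mul1r -mulrA Hpb Hab.
by rewrite T1 T2 T3 T4 addr0 add0r Hqpp.
Qed.

Lemma abs3 : (q * M + h * b) * (q * (1 + N) + 2 * (a * p)) = 1.
Proof.
rewrite mulrDl (mulrDr (q * M)) (mulrDr (h * b)).
have T1 : q * M * (q * (1 + N)) = q.
  by rewrite -mulrA (mulrA M) HMq -mulrA HM2 mulr1 Hqq.
have T2 : q * M * (2 * (a * p)) = 0.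
  by rewrite Hap c2 !mulrA -(mulrA q M p) HMp mulrA Hqp !mul0r.
have T3 : h * b * (q * (1 + N)) = 0.
  by rewrite -mulrA (mulrA b) Hbq !mul0r mulr0.
have T4 : h * b * (2 * (a * p)) = p.
  by rewrite c2 !mulrA -(mulrA h b a) Hba -(mulrA h p p) Hpp -mulrA -c2 mulrA Hh1 mul1r.
by rewrite T1 T2 T3 T4 addr0 add0r Hqpp.
Qed.

Lemma abs4 : (- (q + a * p)) * (- (q + b)) = 1.
Proof.
rewrite mulrNN mulrDl (mulrDr q) (mulrDr (a * p)) Hqq Hqb -mulrA Hpq mulr0 -mulrA Hpb Hab.
by rewrite addr0 add0r Hqpp.
Qed.

Lemma abs5 : (- (q + b)) * (- (q + a * p)) = 1.
Proof.
rewrite mulrNN mulrDl (mulrDr q) (mulrDr b) Hqq Hbq Hap mulrA Hqp mul0r mulrA Hbp Hba.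
by rewrite addr0 add0r Hqpp.
Qed.
End Abs.

Section Drazin.
Variable Q : pzRingType.

Lemma nil_inv (N : Q) k : N ^+ k = 0 ->
  exists M, (1 + N) * M = 1 /\ M * (1 + N) = 1 /\ GRing.comm M N.
Proof.
move=> HN; exists (\sum_(i < k) (- N) ^+ i).
have Hc : GRing.comm (\sum_(i < k) (- N) ^+ i) N.
  apply/commr_sym/commr_sum => i _; apply/commrX/commrN/commr_refl.
have H1 : (1 + N) * \sum_(i < k) (- N) ^+ i = 1.
  have := subrX1 (- N) k; rewrite exprNn HN mulr0 sub0r -opprD mulNr => /eqP.
  by rewrite eqr_opp addrC => /eqP <-.
split => //; split => //; by rewrite mulrDr mulr1 Hc -[X in X + _]mul1r -mulrDl.
Qed.

Variables (h : Q) (Hh1 : h * 2 = 1) (Hh2 : 2 * h = 1).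

Lemma hC x : h * x = x * h.
Proof.
have c2 : GRing.comm x 2 by apply: commr_nat.
rewrite -[h * x]mulr1 -Hh2 mulrA -(mulrA h x 2) c2 mulrA Hh1 mul1r //.
Qed.

Variables (a x y : Q) (k : nat)
  (Hx : a ^+ k = a ^+ k.+1 * x) (Hy : a ^+ k = y * a ^+ k.+1).

Lemma L1 j : a ^+ k = a ^+ (k + j) * x ^+ j.
Proof.
elim: j => [|j IH]; first by rewrite addn0 expr0 mulr1.
have E : (k + j.+1 = j + k.+1)%N by rewrite !addnS addnC.
by rewrite {1}IH E exprS (exprD a j k.+1) -mulrA (mulrA (a ^+ k.+1)) -Hx mulrA -exprD addnC.
Qed.

Lemma L2 j : a ^+ k = y ^+ j * a ^+ (k + j).
Proof.
elim: j => [|j IH]; first by rewrite addn0 expr0 mul1r.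
have E : (k + j.+1 = k.+1 + j)%N by rewrite addnS addSn.
by rewrite {1}IH E exprSr (exprD a k.+1 j) -mulrA (mulrA y) -Hy -exprD.
Qed.



Definition p := a ^+ k * x ^+ k.
Definition b := a ^+ k * x ^+ k.+1.

Lemma F1 : p = y ^+ k * a ^+ k.
Proof. by rewrite /p {1}(L2 k) -mulrA -L1. Qed.
Lemma F2 : b = y ^+ k.+1 * a ^+ k.
Proof. by rewrite /b {1}(L2 k.+1) -mulrA -L1. Qed.
Lemma F3 : a * b = p.
Proof. by rewrite /b exprS mulrA -exprS mulrA -Hx. Qed.
Lemma F4 : b * a = p.
Proof. by rewrite F2 -mulrA -exprSr exprSr -mulrA -Hy -F1. Qed.
Lemma F5 : p * b = b.
Proof. by rewrite F1 /b -mulrA (mulrA (a ^+ k)) -exprD mulrA -L2. Qed.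
Lemma F5' : b * p = b.
Proof. by rewrite {1}F2 /p -mulrA (mulrA (a ^+ k)) -exprD -L1 -F2. Qed.
Lemma F6 : p * p = p.
Proof. by rewrite -{1}F3 -mulrA F5' F3. Qed.
Lemma F7 : a * p = p * a.
Proof. by rewrite -{1}F4 mulrA F3. Qed.
Lemma F8 : a ^+ k * p = a ^+ k.
Proof. by rewrite /p mulrA -exprD -L1. Qed.

Definition q := 1 - p.
Lemma Hqp : q * p = 0. Proof. by rewrite /q mulrBl mul1r F6 subrr. Qed.
Lemma Hpq : p * q = 0. Proof. by rewrite /q mulrBr mulr1 F6 subrr. Qed.
Lemma Hqq : q * q = q. Proof. by rewrite {1}/q mulrBl mul1r Hpq subr0. Qed.
Lemma Hqa : q * a = a * q. Proof. by rewrite /q mulrBl mulrBr mul1r mulr1 F7. Qed.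
Lemma Hqb : q * b = 0. Proof. by rewrite /q mulrBl mul1r F5 subrr. Qed.
Lemma Hbq : b * q = 0. Proof. by rewrite /q mulrBr mulr1 F5' subrr. Qed.
Lemma Hpb : p * b = b. Proof. exact: F5. Qed.
Lemma Hqpp : q + p = 1. Proof. by rewrite /q subrK. Qed.

Definition N := a * q.
Lemma NX j : N ^+ j.+1 = a ^+ j.+1 * q.
Proof.
elim: j => [|j IH]; first by rewrite !expr1.
by rewrite exprSr IH /N -(mulrA (a ^+ j.+1)) (mulrA q a) Hqa -(mulrA a) Hqq mulrA -exprSr.
Qed.
Lemma Nnil : N ^+ k.+1 = 0.
Proof. by rewrite NX exprS -mulrA /q mulrBr mulr1 F8 subrr mulr0. Qed.
Lemma HNp : N * p = 0. Proof. by rewrite /N -mulrA Hqp mulr0. Qed.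
Lemma HpN : p * N = 0. Proof. by rewrite /N mulrA -F7 -mulrA Hpq mulr0. Qed.
Lemma HqN : q * N = N. Proof. by rewrite /N mulrA Hqa -mulrA Hqq. Qed.
Lemma HNq : N * q = N. Proof. by rewrite /N -mulrA Hqq. Qed.
Lemma HNb : N * b = 0. Proof. by rewrite /N -mulrA Hqb mulr0. Qed.

Lemma comm_inv (c M z : Q) : c * M = 1 -> M * c = 1 -> c * z = z * c -> M * z = z * M.
Proof.
move=> H1 H2 Hc.
by rewrite -[M * z]mulr1 -H1 mulrA -(mulrA M z c) -Hc (mulrA M c z) H2 mul1r.
Qed.


Lemma decomp : exists u v u' v' : Q,
  a = u + v /\ u * u' = 1 /\ u' * u = 1 /\ v * v' = 1 /\ v' * v = 1.
Proof.
have [M [HM1 [HM2 HMN]]] := nil_inv Nnil.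
have HMp : M * p = p * M.
  apply: (comm_inv HM1 HM2).
  by rewrite mulrDl mulrDr mul1r mulr1 HNp HpN.
have HMq : M * q = q * M by rewrite /q mulrBr mulrBl mulr1 mul1r HMp.
have Hc1q : (1 + N) * q = q * (1 + N).
  by rewrite (mulrDl 1 N q) (mulrDr q 1 N) mul1r mulr1 HNq HqN.
have := Hqpp; have := Hqp; have := Hpq; have := Hqq; have := F6; have := F3; have := F4.
have := Hpb; have := F5'; have := Hqb; have := Hbq; have := F7.
have HN : N = a * q by [].
have := HqN; have := HNb; have := hC.
move=> *.
exists (q * (1 + N) + 2 * (a * p)), (- (q + a * p)), (q * M + h * b), (- (q + b)).
split; [apply: abs1 | split; [apply: abs2 | split; [apply: abs3 | split; [apply: abs4|apply: abs5]]]];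
  by [].
Qed.
End Drazin.



Section PowDep.
Variable Q : pzRingType.

Definition qunit (z : Q) := exists w, w * z = 1 /\ z * w = 1.

Lemma powdep (F : Q) n : forall j (D : nat -> Q),
  (forall i, qunit (D i) \/ D i = 0) -> (exists i, (i < n)%N /\ qunit (D i)) ->
  F ^+ j * \sum_(i < n) F ^+ i * D i = 0 -> exists k x, F ^+ k = F ^+ k.+1 * x.
Proof.
elim: n => [|n IH] j D HD [i [Hi HDi]].
  by [].
rewrite big_ord_recl expr0 mul1r.
have -> : \sum_(i < n) F ^+ (lift ord0 i) * D (lift ord0 i) =
          F * \sum_(i < n) F ^+ i * D i.+1.
  by rewrite mulr_sumr; apply: eq_bigr => l _; rewrite /= exprS mulrA.
case: (HD 0%N) => [[w [Hw1 Hw2]]|H0] Hs.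
  exists j, (- ((\sum_(i < n) F ^+ i * D i.+1) * w)).
  move: Hs; rewrite mulrDr => /eqP; rewrite addr_eq0 => /eqP Hs.
  rewrite -[F ^+ j]mulr1 -Hw2 mulrA Hs mulNr mulrN !mulrA -exprSr.
  by [].
rewrite H0 add0r mulrA -exprSr in Hs.
case: i Hi HDi => [|i] Hi HDi.
  case: HDi => w [_]; rewrite H0 mul0r => H10.
  by exists j, 0; rewrite mulr0 -[F ^+ j]mulr1 -H10 mulr0.
apply: (IH j.+1 (fun i => D i.+1)) => //.
by exists i.
Qed.
End PowDep.

Lemma exprC (Q : pzRingType) (F : Q) n : ((F : Q^c) ^+ n : Q^c) = F ^+ n :> Q.
Proof.
elim: n => [|n IH]; first by [].
by rewrite exprS exprSr -IH.
Qed.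

Lemma powdepL (Q : pzRingType) (F : Q) n (D : nat -> Q) :
  (forall i, qunit (D i) \/ D i = 0) -> (exists i, (i < n)%N /\ qunit (D i)) ->
  \sum_(i < n) D i * F ^+ i = 0 -> exists k y, F ^+ k = y * F ^+ k.+1.
Proof.
move=> HD [i [Hi [w [Hw1 Hw2]]]] Hs.
have [k [y Hy]] : exists k (x : Q^c), (F : Q^c) ^+ k = (F : Q^c) ^+ k.+1 * x.
  apply: (@powdep (Q^c) F n 0 D).
  - move=> l; case: (HD l) => [[w' [H1 H2]]|H0]; last by right.
    by left; exists w'; split.
  - by exists i; split => //; exists w; split.
  - rewrite expr0 mul1r.
    have E : forall l : 'I_n, ((F : Q^c) ^+ l * (D l : Q^c) : Q^c) = D l * F ^+ l :> Q.
      by move=> l; rewrite exprC.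
    exact: (etrans (eq_bigr _ (fun l _ => E l)) Hs).
  exists k, y; have H1 := exprC F k; have H2 := exprC F k.+1.
  rewrite -H1 -H2; exact: Hy.
Qed.



Section Jac.
Variable R : unitRingType.
Local Notation P := (@jacobson R).

Lemma swap_unit (a b : R) : (1 - a * b) \is a GRing.unit -> (1 - b * a) \is a GRing.unit.
Proof.
move=> Hu; set c := (1 - a * b)^-1; set X := b * c * a.
apply/unitrP; exists (1 + X); split.
  have E : X - X * (b * a) = b * a.
    have -> : X - X * (b * a) = b * (c * (1 - a * b)) * a.
      by rewrite /X mulrBr mulr1 mulrBr mulrBl !mulrA.
    by rewrite mulVr // mulr1.
  rewrite mulrBr mulr1 mulrDl mul1r opprD addrACA E subrK //.
have E : X - b * a * X = b * a.
  have -> : X - b * a * X = b * ((1 - a * b) * c) * a.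
    by rewrite /X mulrBl mul1r mulrBr mulrBl !mulrA.
  by rewrite mulrV // mulr1.
by rewrite mulrBl mul1r mulrDr mulr1 opprD addrACA E subrK.
Qed.

Lemma jac_ideal : jideal P.
Proof.
split.
- by move=> r; rewrite mulr0 subr0 unitr1.
- move=> x y Hx Hy r.
  have Hu := Hx r; set u := 1 - r * x in Hu.
  have -> : 1 - r * (x + y) = u * (1 - (u^-1 * r) * y).
    by rewrite mulrBr mulr1 !mulrA mulrV // mul1r /u mulrDr opprD addrA.
  by rewrite unitrMl // Hy.
- by move=> x Hx r; rewrite mulrN -mulNr; apply: Hx.
- by move=> r x Hx s; rewrite mulrA; apply: Hx.
- move=> r x Hx s; rewrite mulrA; apply: (@swap_unit x); rewrite mulrA; apply: Hx.
- move=> x Hx; have := Hx (-1); rewrite mulN1r opprK => /unitrP.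
  by move=> [w [H1 H2]]; exists w.
Qed.

Lemma jac_not1 (HR : local_ring R) : ~ P 1.
Proof. by case: HR. Qed.

Lemma jac_unit (HR : local_ring R) x : ~ P x -> x \is a GRing.unit.
Proof.
case: HR => _ HR /HR [y [Hxy Hyx]].
have U1 : x * y \is a GRing.unit.
  have [w [H1 H2]] := jP1u jac_ideal Hxy; apply/unitrP; exists w.
  by rewrite addrC subrK in H1 H2.
have U2 : y * x \is a GRing.unit.
  have [w [H1 H2]] := jP1u jac_ideal Hyx; apply/unitrP; exists w.
  by rewrite addrC subrK in H1 H2.
set r := y * (x * y)^-1; set l := (y * x)^-1 * y.
have Hr : x * r = 1 by rewrite /r mulrA mulrV.
have Hl : l * x = 1 by rewrite /l -mulrA mulVr.
have Hlr : l = r by rewrite -[l]mulr1 -Hr mulrA Hl mul1r.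
apply/unitrP; exists r; split => //; by rewrite -Hlr.
Qed.

Lemma jac_loc (HR : local_ring R) x : P x \/ exists w, w * x = 1 /\ x * w = 1.
Proof.
have [H|H] := classic (P x); first by left.
by right; move/unitrP: (jac_unit HR H).
Qed.
End Jac.

Section JLemma.
Variables (R : unitRingType) (m : nat).
Local Notation G := (GR R m).
Local Notation P := (@jacobson R).

Definition inI (a : G) : Prop := forall k, P (a k).

Lemma coefM (a b : G) k : (a * b) k = \sum_i a i * b (k - i).
Proof. exact: gr_mulE. Qed.
Lemma coefD (a b : G) k : (a + b) k = a k + b k.
Proof. by rewrite ffunE. Qed.
Lemma coef1 k : (1 : G) k = (k == 0)%:R.
Proof. by rewrite /= ffunE; have -> : (k == 0) = (val k == 0%N) by []; case: (_ == _). Qed.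

Lemma inIMr (i a : G) : inI i -> inI (i * a).
Proof.
move=> Hi k; rewrite coefM; apply: (jPsum (@jac_ideal R)) => l.
exact: (jPMr (@jac_ideal R)).
Qed.
Lemma inIMl (a i : G) : inI i -> inI (a * i).
Proof.
move=> Hi k; rewrite coefM; apply: (jPsum (@jac_ideal R)) => l.
exact: (jPMl (@jac_ideal R)).
Qed.
Lemma inIN (i : G) : inI i -> inI (- i).
Proof. by move=> Hi k; rewrite ffunE; apply: (jPN (@jac_ideal R)). Qed.
Lemma inID (i j : G) : inI i -> inI j -> inI (i + j).
Proof. by move=> Hi Hj k; rewrite ffunE; apply: (jPD (@jac_ideal R)). Qed.

Lemma rinv (i : G) : inI i -> exists w : G, (1 + i) * w = 1.
Proof.
move=> Hi.
pose A := fun k j : 'I_m.+1 => (1 + i) (k - j).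
have HA : forall k j, P (A k j - (k == j)%:R).
  by move=> k j; rewrite /A coefD coef1 subr_eq0 addrAC subrr add0r.
have [z Hz] := @linsys _ _ (@jac_ideal R) _ A (fun k => (1 : G) k) HA.
exists [ffun j => z j].
apply/ffunP => k; rewrite coefM (reindex_inj (subrI k)) /=.
  rewrite -Hz; apply: eq_bigr => j _; rewrite /A; congr (_ * _); by rewrite ffunE subKr.
Qed.

Lemma jlemma (i : G) : inI i -> exists w : G, w * (1 + i) = 1 /\ (1 + i) * w = 1.
Proof.
move=> Hi; have [z Hz] := rinv Hi.
have Ez : z = 1 + (- (i * z)).
  by apply/eqP; rewrite -subr_eq opprK -{1}[z]mul1r -mulrDl Hz.
have [w Hw] : exists w, z * w = 1 by rewrite Ez; apply: rinv; apply/inIN/inIMr.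
have : (1 + i) * (z * w) = 1 * w by rewrite mulrA Hz.
rewrite Hw mulr1 mul1r => Hw'.
by exists z; split; [rewrite Hw' | exact: Hz].
Qed.
End JLemma.

Local Open Scope quotient_scope.

Definition pb (Pr : Prop) : bool := if excluded_middle_informative Pr then true else false.
Lemma pbP (Pr : Prop) : reflect Pr (pb Pr).
Proof. by rewrite /pb; case: excluded_middle_informative => H; constructor. Qed.

Section Quot.
Variables (R : unitRingType) (m : nat).
Local Notation G := (GR R m).

Definition Ib : {pred G} := fun a => pb (inI a).

Lemma Ib_closed : GRing.zmod_closed Ib.
Proof.
split; first by apply/pbP => k; rewrite ffunE; exact: (jP0 (@jac_ideal R)).
move=> u v /pbP Hu /pbP Hv; apply/pbP; apply: inID => //; exact: inIN.
Qed.

HB.instance Definition _ := GRing.isZmodClosed.Build G Ib Ib_closed.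

Definition IbZ := GRing.ZmodClosed.clone G Ib _.
Definition Q := Quotient.quot IbZ.

Lemma IbMl (a i : G) : i \in IbZ -> a * i \in IbZ.
Proof. by move=> /pbP Hi; apply/pbP; apply: inIMl. Qed.
Lemma IbMr (i a : G) : i \in IbZ -> i * a \in IbZ.
Proof. by move=> /pbP Hi; apply/pbP; apply: inIMr. Qed.

Definition qone : Q := lift_cst Q 1.
Definition qmul := lift_op2 Q *%R.
Canonical pi_one_morph := PiConst qone.

Lemma pi_mul : {morph \pi_Q : x y / x * y >-> qmul x y}.
Proof.
move=> x y; unlock qmul; apply/eqP; rewrite piE Quotient.equivE.
set x' := repr _; set y' := repr _.
have Hx : x - x' \in IbZ by rewrite Quotient.idealrBE reprK.
have Hy : y - y' \in IbZ by rewrite Quotient.idealrBE reprK.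
have -> : x * y - x' * y' = x * (y - y') + (x - x') * y'.
  by rewrite mulrBr mulrBl addrA subrK.
apply: rpredD; [exact: IbMl | exact: IbMr].
Qed.
Canonical pi_mul_morph := PiMorph2 pi_mul.

Lemma qmulA : associative qmul.
Proof. by move=> x y z; rewrite -[x]reprK -[y]reprK -[z]reprK !piE mulrA. Qed.
Lemma qmul1 : left_id qone qmul.
Proof. by move=> x; rewrite -[x]reprK !piE mul1r. Qed.
Lemma qmulr1 : right_id qone qmul.
Proof. by move=> x; rewrite -[x]reprK !piE mulr1. Qed.
Lemma qmulDl : left_distributive qmul +%R.
Proof.
move=> x y z; rewrite -[x]reprK -[y]reprK -[z]reprK.
by rewrite !piE mulrDl.
Qed.
Lemma qmulDr : right_distributive qmul +%R.
Proof.
move=> x y z; rewrite -[x]reprK -[y]reprK -[z]reprK.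
by rewrite !piE mulrDr.
Qed.
End Quot.
HB.instance Definition _ R m := GRing.Zmodule.copy (Q R m) (Quotient.quot (IbZ R m)).
HB.instance Definition _ R m := GRing.Zmodule_isPzRing.Build (Q R m)
  (@qmulA R m) (@qmul1 R m) (@qmulr1 R m) (@qmulDl R m) (@qmulDr R m).


Section Final.
Variables (R : unitRingType) (m : nat).
Local Notation G := (GR R m).
Local Notation QQ := (Q R m).
Local Notation P := (@jacobson R).
Local Notation pi := (\pi_QQ : G -> QQ).

Lemma pi_mulE (x y : G) : pi (x * y) = pi x * pi y.
Proof. exact: pi_mul. Qed.
Lemma pi_addE (x y : G) : pi (x + y) = pi x + pi y.
Proof. exact: Quotient.pi_add. Qed.
Lemma pi_oneE : pi 1 = 1.
Proof. change (pi 1 = qone R m). by rewrite /qone -lock. Qed.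
Lemma pi_eqE (x y : G) : (pi x = pi y) <-> inI (x - y).
Proof.
split.
  by move=> /eqP; rewrite -Quotient.idealrBE => /pbP.
by move=> H; apply/eqP; rewrite -Quotient.idealrBE; apply/pbP.
Qed.

Lemma pi0 : pi 0 = 0.
Proof. have H : pi 0 + pi 0 = pi 0 + 0 by rewrite -pi_addE !addr0. exact: (addrI _ H). Qed.
Lemma piN (x : G) : pi (- x) = - pi x.
Proof. by apply/eqP; rewrite -addr_eq0 -pi_addE addNr pi0. Qed.
Lemma piB (x y : G) : pi (x - y) = pi x - pi y.
Proof. by rewrite pi_addE piN. Qed.
Lemma pi_sum (I : finType) (F : I -> G) : pi (\sum_i F i) = \sum_i pi (F i).
Proof. exact: (big_morph pi pi_addE pi0). Qed.
Lemma piX (x : G) k : pi (x ^+ k) = (pi x) ^+ k.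
Proof.
elim: k => [|k IH]; first by rewrite !expr0 pi_oneE.
by rewrite !exprS pi_mulE IH.
Qed.
Lemma pi_I (x : G) : inI x -> pi x = 0.
Proof. by move=> H; rewrite -pi0; apply/pi_eqE; rewrite subr0. Qed.

Definition sc (c : R) : G := [ffun k : 'I_m.+1 => if val k == 0%N then c else 0].
Lemma scE c (k : 'I_m.+1) : sc c k = if k == 0 then c else 0.
Proof. by rewrite ffunE. Qed.
Lemma mul_sc (x : G) c k : (x * sc c) k = x k * c.
Proof.
rewrite coefM (bigD1 k) //= scE subrr eqxx big1 ?addr0 // => i Hi.
by rewrite scE subr_eq0 eq_sym (negbTE Hi) mulr0.
Qed.
Lemma sc_mul c (x : G) k : (sc c * x) k = c * x k.
Proof.
rewrite coefM (bigD1 0) //= scE eqxx subr0 big1 ?addr0 // => i Hi.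
by rewrite scE (negbTE Hi) mul0r.
Qed.
Lemma scM c d : sc c * sc d = sc (c * d).
Proof.
apply/ffunP => k; rewrite mul_sc !scE; case: (_ == _) => //; by rewrite mul0r.
Qed.
Lemma sc1 : sc 1 = 1.
Proof. by []. Qed.
Lemma scD c d : sc c + sc d = sc (c + d).
Proof. apply/ffunP => k; rewrite ffunE !scE; case: (_ == _) => //; by rewrite addr0. Qed.
Lemma scI c : P c -> inI (sc c).
Proof. move=> H k; rewrite scE; case: (_ == _) => //; exact: (jP0 (@jac_ideal R)). Qed.

Lemma lift_unit (x : G) (X' : QQ) : pi x * X' = 1 -> X' * pi x = 1 ->
  exists w : G, x * w = 1 /\ w * x = 1.
Proof.
move=> H1 H2; set x' := repr X'.
have Ex' : pi x' = X' by rewrite /x' reprK.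
have I1 : inI (x * x' - 1) by apply/pi_eqE; rewrite pi_mulE Ex' H1 pi_oneE.
have I2 : inI (x' * x - 1) by apply/pi_eqE; rewrite pi_mulE Ex' H2 pi_oneE.
have [w1 [_ Hw1]] := jlemma I1; have [w2 [Hw2 _]] := jlemma I2.
rewrite addrC subrK in Hw1; rewrite addrC subrK in Hw2.
have Hlr : w2 * x' = x' * w1.
  by rewrite -[LHS]mulr1 -Hw1 !mulrA -(mulrA w2) Hw2 mul1r.
exists (x' * w1); split; first by rewrite mulrA.
by rewrite -Hlr -mulrA.
Qed.

Hypotheses (HR : local_ring R) (H2 : char_quot_not2 R).

Lemma qunit_sc c : ~ P c -> qunit (pi (sc c)).
Proof.
move=> Hc; have /unitrP [w [Hw1 Hw2]] := jac_unit HR Hc.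
by exists (pi (sc w)); rewrite -!pi_mulE !scM Hw1 Hw2 sc1 pi_oneE.
Qed.

Lemma unit_or_zero c : qunit (pi (sc c)) \/ pi (sc c) = 0.
Proof.
have [Hc|Hc] := classic (P c); last by left; exact: qunit_sc.
by right; apply: pi_I; exact: scI.
Qed.

Lemma mainG (a : G) : exists u v : G, (exists w, u * w = 1 /\ w * u = 1) /\
   (exists w, v * w = 1 /\ w * v = 1) /\ a = u + v.
Proof.
set F := pi a.
have [k1 [x Hx]] : exists k x, F ^+ k = F ^+ k.+1 * x.
  have [d [[i0 Hi0] Hd]] := depvec (@jac_ideal R) (jac_not1 HR) (jac_loc HR)
     (fun (i : 'I_m.+2) (k : 'I_m.+1) => (a ^+ i) k).
  pose d' := fun i : nat => if (i < m.+2)%N then d (inord i) else 0.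
  have Ed (i : 'I_m.+2) : d' i = d i by rewrite /d' ltn_ord inord_val.
  apply: (@powdep QQ F m.+2 0 (fun i => pi (sc (d' i)))).
  - by move=> i; apply: unit_or_zero.
  - by exists i0; split => //; rewrite Ed; apply: qunit_sc.
  - rewrite expr0 mul1r.
    have -> : \sum_(i < m.+2) F ^+ i * pi (sc (d' i)) =
              pi (\sum_(i < m.+2) a ^+ i * sc (d' i)).
      by rewrite pi_sum; apply: eq_bigr => i _; rewrite pi_mulE piX.
    apply: pi_I => k; rewrite sum_ffunE.
    have := Hd k; congr (P _); apply: eq_bigr => i _; by rewrite mul_sc Ed.
have [k2 [y Hy]] : exists k y, F ^+ k = y * F ^+ k.+1.
  have [d [[i0 Hi0] Hd]] := depvecL (@jac_ideal R) (jac_not1 HR) (jac_loc HR)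
     (fun (i : 'I_m.+2) (k : 'I_m.+1) => (a ^+ i) k).
  pose d' := fun i : nat => if (i < m.+2)%N then d (inord i) else 0.
  have Ed (i : 'I_m.+2) : d' i = d i by rewrite /d' ltn_ord inord_val.
  apply: (@powdepL QQ F m.+2 (fun i => pi (sc (d' i)))).
  - by move=> i; apply: unit_or_zero.
  - by exists i0; split => //; rewrite Ed; apply: qunit_sc.
  - have -> : \sum_(i < m.+2) pi (sc (d' i)) * F ^+ i =
              pi (\sum_(i < m.+2) sc (d' i) * a ^+ i).
      by rewrite pi_sum; apply: eq_bigr => i _; rewrite pi_mulE piX.
    apply: pi_I => k; rewrite sum_ffunE.
    have := Hd k; congr (P _); apply: eq_bigr => i _; by rewrite sc_mul Ed.
have HxK : F ^+ (k1 + k2) = F ^+ (k1 + k2).+1 * x.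
  by rewrite addnC exprD Hx -addnS exprD mulrA.
have HyK : F ^+ (k1 + k2) = y * F ^+ (k1 + k2).+1.
  by rewrite addnC exprD Hy -mulrA -exprD addSn.
have U2 : (2%:R : R) \is a GRing.unit := jac_unit HR H2.
have E2 : (2%:R : QQ) = pi (sc 2%:R).
  by rewrite -[2%N]/(1 + 1)%N !natrD -scD sc1 pi_addE pi_oneE.
have Hh1 : pi (sc (2%:R^-1)) * 2%:R = 1 by rewrite E2 -pi_mulE scM mulVr // sc1 pi_oneE.
have Hh2 : 2%:R * pi (sc (2%:R^-1)) = 1 by rewrite E2 -pi_mulE scM mulrV // sc1 pi_oneE.
have [U [V [U' [V' [HF [HU1 [HU2 [HV1 HV2]]]]]]]] := decomp Hh1 Hh2 HxK HyK.
have EU : pi (repr U) = U by rewrite reprK.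
have EV : pi (a - repr U) = V by rewrite piB EU -/F HF addrC addKr.
exists (repr U), (a - repr U); split; [|split].
- by apply: (lift_unit (X' := U')); rewrite EU.
- by apply: (lift_unit (X' := V')); rewrite EV.
- by rewrite addrC subrK.
Qed.
End Final.

Theorem theorem10 (R : unitRingType) (n : nat) :
  (0 < n)%N -> local_ring R -> char_quot_not2 R -> gr_two_good R n.
Proof.
case: n => [//|m] _ HR H2 a.
have [u [v [[w1 [Hu1 Hu2]] [[w2 [Hv1 Hv2]] E]]]] := mainG HR H2 (a : GR R m).
exists u, v; split; [exists w1 | split; [exists w2 | exact: E]]; by split.
Qed.
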